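(* Let $(S,\ast)$ be an adequate partial semigroup and let $A\subseteq S$. If there is an idempotent $p\in\overline{A}\cap J_\delta(S)$, then there is a nonempty set $T$ of functions such that (i) for all $f\in T$, $\mathrm{domain}(f)\in\omega$ and $\mathrm{range}(f)\subseteq A$; (ii) for all $f\in T$ and all $x\in B_f(T)$, $B_{f^\frown x}(T)\subseteq x^{-1}B_f(T)$; (iii) for all $F\in\mathcal{P}_f(T)$, $\bigcap_{f\in F}B_f(T)$ is a $J_\delta$-set. Moreover, there is a downward directed family $\langle A_F\rangle_{F\in I}$ of subsets of $A$ such that (a) for all $F\in I$ and all $x\in A_F$ there exists $G\in I$ with $A_G\subseteq x^{-1}A_F$; (b) for each $\mathcal{F}\in\mathcal{P}_f(I)$, $\bigcap_{F\in\mathcal{F}}A_F$ is a $J_\delta$-set.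
   Context: A partial semigroup is a pair $(S,\ast)$ where $\ast$ is an operation defined on a subset of $S\times S$ such that $(x\ast y)\ast z=x\ast(y\ast z)$ in the sense that if either side is defined, so is the other and they are equal. $\phi_S(s)=\{t: s\ast t\text{ defined}\}$, $\sigma_S(H)=\bigcap_{s\in H}\phi_S(s)$ for $H\in\mathcal{P}_f(S)$ (finite nonempty subsets); $S$ is adequate if all $\sigma_S(H)\ne\emptyset$. $\overline{A}=\{p\in\beta S: A\in p\}$. $\delta S=\bigcap_{x\in S}\overline{\phi_S(x)}$, with operation $p\ast q=\{B\subseteq S:\{s: s^{-1}B\in q\}\in p\}$, where $s^{-1}B=\{t\in\phi_S(s): s\ast t\in B\}$. A sequence $\langle y_n\rangle$ in $S$ is adequate if $\prod_{n\in F}y_n$ is defined for every $F\in\mathcal{P}_f(\mathbb{N})$ and for every $K\in\mathcal{P}_f(S)$ there is $m$ with $\prod_{n\in F}y_n\in\sigma_S(K)$ whenever $\min F\ge m$; $\mathcal{T}_S$ is the set of adequate sequences. For $W\in\mathcal{P}_f(S)$, $a\in S$, $W\ast a=\{w\ast a: w\in W,\ w\ast a\text{ defined}\}$. $B\subseteq S$ is a $J_\delta$-set if for every $F\in\mathcal{P}_f(\mathcal{T}_S)$ and $W\in\mathcal{P}_f(S)$ there exist $a\in\sigma_S(W)$ and $H\in\mathcal{P}_f(\mathbb{N})$ with $\prod_{t\in H}f(t)\in\sigma_S(W\ast a)$ and $a\ast\prod_{t\in H}f(t)\in B$ for each $f\in F$; $J_\delta(S)=\{p\in\delta S:\text{every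 member of }p\text{ is a }J_\delta\text{-set}\}$. $\omega$ is the first infinite ordinal, $[n]=\{0,\dots,n-1\}$. For $f$ with domain $[n]$ and $x\in S$, $f^\frown x=f\cup\{(n,x)\}$. For a set $T$ of such functions and $f\in T$, $B_f(T)=\{x: f^\frown x\in T\}$. A family $\langle A_F\rangle_{F\in I}$ is downward directed if for all $F,G\in I$ there is $H\in I$ with $A_H\subseteq A_F\cap A_G$. *)

(* Defs.v *)
From Stdlib Require Import List Arith Sorted.
Import ListNotations.

Section PS.
Variable S : Type.
Variable op : S -> S -> option S.

(* (x*y)*z = x*(y*z): either side defined iff the other is, and they agree. *)
Definition partial_assoc : Prop :=
  forall x y z,
    match op x y with Some xy => op xy z | None => None end =
    match op y z with Some yz => op x yz | None => None end.

Definition phi (s : S) : S -> Prop := fun t => op s t <> None.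

Definition sigma (H : list S) : S -> Prop :=
  fun t => forall s, In s H -> op s t <> None.

Definition adequate : Prop :=
  forall H : list S, H <> [] -> exists t, sigma H t.

Definition inv (s : S) (B : S -> Prop) : S -> Prop :=
  fun t => exists u, op s t = Some u /\ B u.

(* product x_1 * x_2 * ... * x_n of a nonempty list (None if undefined/empty) *)
Fixpoint prodl (l : list S) : option S :=
  match l with
  | [] => None
  | [x] => Some x
  | x :: l' => match prodl l' with Some v => op x v | None => None end
  end.

(* finite nonempty subsets of N are represented by strictly increasing
   nonempty lists; prod_{n in F} y_n = prodl (map y F) (increasing order) *)
Definition finN (F : list nat) : Prop := Sorted lt F /\ F <> [].

Definition adequate_seq (y : nat -> S) : Prop :=
  (forall F, finN F -> prodl (map y F) <> None) /\
  (forall K : list S, K <> [] -> exists m, forall F, finN F -> m <= hd 0 F ->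
      exists v, prodl (map y F) = Some v /\ sigma K v).

Definition Jdelta_set (B : S -> Prop) : Prop :=
  forall (F : list (nat -> S)) (W : list S),
    F <> [] -> (forall f, In f F -> adequate_seq f) -> W <> [] ->
    exists a, sigma W a /\
    exists H, finN H /\
      forall f, In f F ->
        exists v, prodl (map f H) = Some v /\
          (* v in sigma_S(W * a) *)
          (forall w wa, In w W -> op w a = Some wa -> op wa v <> None) /\
          inv a B v.

Definition ultrafilter (p : (S -> Prop) -> Prop) : Prop :=
  p (fun _ => True) /\ ~ p (fun _ => False) /\
  (forall B C : S -> Prop, (forall x, B x -> C x) -> p B -> p C) /\
  (forall B C : S -> Prop, p B -> p C -> p (fun x => B x /\ C x)) /\
  (forall B : S -> Prop, p B \/ p (fun x => ~ B x)).

Definition in_deltaS (p : (S -> Prop) -> Prop) : Prop :=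
  ultrafilter p /\ forall x, p (phi x).

Definition ps_mul (p q : (S -> Prop) -> Prop) : (S -> Prop) -> Prop :=
  fun B => p (fun s => q (inv s B)).

Definition in_Jdelta (p : (S -> Prop) -> Prop) : Prop :=
  in_deltaS p /\ forall B, p B -> Jdelta_set B.

End PS.

Arguments partial_assoc {S}. Arguments phi {S}. Arguments sigma {S}.
Arguments adequate {S}. Arguments inv {S}. Arguments prodl {S}.
Arguments adequate_seq {S}. Arguments Jdelta_set {S}.
Arguments ultrafilter {S}. Arguments in_deltaS {S}. Arguments ps_mul {S}.
Arguments in_Jdelta {S}.

(* Main.v *)
Require Import Defs.
From Stdlib Require Import List.
Import ListNotations.

Section Help.
Variables (S : Type) (op : S -> S -> option S) (Hassoc : partial_assoc op)
  (A : S -> Prop) (p : (S -> Prop) -> Prop) (Hu : ultrafilter p)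
  (Hidem : forall B, ps_mul op p p B <-> p B) (HpA : p A)
  (HJ : forall B, p B -> Jdelta_set op B).

Lemma p_mono (B C : S -> Prop) : (forall x, B x -> C x) -> p B -> p C.
Proof. destruct Hu as [_ [_ [H _]]]. apply H. Qed.

Lemma p_and (B C : S -> Prop) : p B -> p C -> p (fun x => B x /\ C x).
Proof. destruct Hu as [_ [_ [_ [H _]]]]. apply H. Qed.

Lemma p_list {X} (F : list X) (Q : X -> S -> Prop) :
  (forall f, In f F -> p (Q f)) -> p (fun x => forall f, In f F -> Q f x).
Proof.
  induction F as [|a F IH]; simpl; intros H.
  - apply p_mono with (fun _ => True). intros x _ f []. apply Hu.
  - apply p_mono with (fun x => Q a x /\ (forall f, In f F -> Q f x)).
    + intros x [H1 H2] f [<-|Hin]; auto.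
    + apply p_and; auto.
Qed.

Definition star (C : S -> Prop) : S -> Prop := fun s => C s /\ p (inv op s C).

Lemma star_p C : p C -> p (star C).
Proof. intro H. apply p_and; auto. apply (proj2 (Hidem C) H). Qed.

Lemma star_inv C x : p C -> star C x -> p (inv op x (star C)).
Proof.
  intros HC [Hx Hpx].
  pose proof (proj2 (Hidem _) Hpx) as H1.
  apply p_mono with (fun y => inv op x C y /\ p (inv op y (inv op x C))).
  2: apply p_and; auto.
  intros y [[u [Hxy Cu]] Hp]. exists u. split; auto. split; auto.
  apply p_mono with (2 := Hp). intros z [v [Hyz [w [Hxv Cw]]]].
  exists w. split; auto. pose proof (Hassoc x y z) as E.
  rewrite Hxy, Hyz in E. rewrite E; exact Hxv.
Qed.

Definition step (st : Prop * (S -> Prop)) (x : S) : Prop * (S -> Prop) :=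
  (fst st /\ snd st x, star (fun y => inv op x (snd st) y /\ A y)).

Definition Bs f := snd (fold_left step f (True, star A)).
Definition Tt f := fst (fold_left step f (True, star A)).

Lemma T_snoc f x : Tt (f ++ [x]) <-> Tt f /\ Bs f x.
Proof. unfold Tt, Bs. rewrite fold_left_app. simpl. tauto. Qed.

Lemma B_snoc f x : Bs (f ++ [x]) = star (fun y => inv op x (Bs f) y /\ A y).
Proof. unfold Bs. rewrite fold_left_app. reflexivity. Qed.

Lemma Bs_A f x : Bs f x -> A x.
Proof.
  destruct f as [|y f] using rev_ind.
  - intros [H _]; exact H.
  - rewrite B_snoc. intros [[_ H] _]; exact H.
Qed.

Lemma good f : Tt f -> exists C, p C /\ Bs f = star C.
Proof.
  induction f as [|y f IH] using rev_ind.
  - intros _. exists A. split; auto.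
  - intros H. apply T_snoc in H as [Hf Hy].
    destruct (IH Hf) as [C [HC E]].
    exists (fun z => inv op y (Bs f) z /\ A z). split.
    + apply p_and; auto. rewrite E in *. apply star_inv; auto.
    + apply B_snoc.
Qed.

Lemma good_p f : Tt f -> p (Bs f).
Proof. intros H. destruct (good f H) as [C [HC ->]]. apply star_p; auto. Qed.

Lemma main_aux :
  (exists T : list S -> Prop,
     (exists f, T f) /\
     (forall f, T f -> forall x, In x f -> A x) /\
     (forall f, T f -> forall x, T (f ++ [x]) ->
        forall y, T ((f ++ [x]) ++ [y]) -> inv op x (fun z => T (f ++ [z])) y) /\
     (forall F : list (list S), F <> [] -> (forall f, In f F -> T f) ->
        Jdelta_set op (fun x => forall f, In f F -> T (f ++ [x])))) /\
  (exists (I : Type) (AF : I -> S -> Prop),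
     (exists i : I, True) /\
     (forall F G : I, exists H : I, forall x, AF H x -> AF F x /\ AF G x) /\
     (forall F : I, forall x, AF F x -> A x) /\
     (forall F : I, forall x, AF F x -> exists G : I, forall y, AF G y -> inv op x (AF F) y) /\
     (forall FF : list I, FF <> [] -> Jdelta_set op (fun x => forall F, In F FF -> AF F x))).
Proof.
  split.
  - exists Tt. split; [exists []; exact I|].
    split.
    { intros f. induction f as [|y f IH] using rev_ind; intros Hf x Hin.
      - destruct Hin.
      - apply T_snoc in Hf as [Hf Hy]. apply in_app_or in Hin.
        destruct Hin as [Hin|[<-|[]]]; eauto. eapply Bs_A; eauto. }
    split.
    { intros f Hf x Hx y Hy. apply T_snoc in Hy as [_ Hy]. rewrite B_snoc in Hy.
      destruct Hy as [[[u [Hxy Hu']] _] _]. exists u; split; auto.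
      apply T_snoc; split; auto. }
    intros F _ HF. apply HJ. apply p_list. intros f Hin.
    apply p_mono with (Bs f).
    + intros x Hx. apply T_snoc; auto.
    + apply good_p; auto.
  - exists {B : S -> Prop | p B}, (fun i => star (fun y => proj1_sig i y /\ A y)).
    split. { exists (exist _ A HpA); trivial. }
    split.
    { intros [B HB] [C HC]. exists (exist _ (fun y => B y /\ C y) (p_and _ _ HB HC)).
      simpl. intros x [[[Bx Cx] Ax] Hp].
      split; split; auto; apply p_mono with (2 := Hp);
        intros z [u [H1 [[Bu Cu] Au]]]; exists u; auto. }
    split. { intros [B HB] x [[_ Ax] _]; auto. }
    split.
    { intros [B HB] x Hx. simpl in Hx.
      exists (exist _ (inv op x (star (fun y => B y /\ A y)))
                (star_inv _ x (p_and _ _ HB HpA) Hx)).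
      simpl. intros y [[Hy _] _]; exact Hy. }
    intros FF _. apply HJ. apply p_list. intros [B HB] _. apply star_p.
    apply p_and; auto.
Qed.
End Help.

Theorem theorem4p4 (S : Type) (op : S -> S -> option S)
  (Hassoc : partial_assoc op) (Hadeq : adequate op)
  (A : S -> Prop) (p : (S -> Prop) -> Prop)
  (HpJ : in_Jdelta op p) (HpA : p A)
  (Hidem : forall B, ps_mul op p p B <-> p B) :
  (exists T : list S -> Prop,
     (exists f, T f) /\
     (forall f, T f -> forall x, In x f -> A x) /\
     (forall f, T f -> forall x, T (f ++ [x]) ->
        forall y, T ((f ++ [x]) ++ [y]) -> inv op x (fun z => T (f ++ [z])) y) /\
     (forall F : list (list S), F <> [] -> (forall f, In f F -> T f) ->
        Jdelta_set op (fun x => forall f, In f F -> T (f ++ [x])))) /\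
  (exists (I : Type) (AF : I -> S -> Prop),
     (exists i : I, True) /\
     (forall F G : I, exists H : I, forall x, AF H x -> AF F x /\ AF G x) /\
     (forall F : I, forall x, AF F x -> A x) /\
     (forall F : I, forall x, AF F x -> exists G : I, forall y, AF G y -> inv op x (AF F) y) /\
     (forall FF : list I, FF <> [] -> Jdelta_set op (fun x => forall F, In F FF -> AF F x))).
Proof.
  destruct HpJ as [[Hu _] HJ].
  eapply main_aux; eauto.
Qed.
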